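(* Let $I\subset S$ be a nonzero proper graded ideal. Then $$\lim_{k\to\infty}\frac{\mathrm{v}(I^k)}{k}=\alpha(I).$$
   Context: $S=K[x_1,\dots,x_n]$ is a standard graded polynomial ring over a field $K$, $S_d$ its degree-$d$ component. For a graded ideal $I\subset S$, the v-number of $I$ is $\mathrm{v}(I)=\min\{d:\exists f\in S_d\text{ with }(I:f)\in\operatorname{Ass}(I)\}$. For a nonzero graded module $M=\bigoplus_d M_d$, $\alpha(M)=\min\{d:M_d\neq0\}$ is its initial degree; $\alpha(I)$ is the least degree of a nonzero element of $I$. *)

(* Defs.v *)
From HB Require Import structures.
From mathcomp Require Import all_boot all_order all_algebra.
From mathcomp Require Export mpoly.
Set Implicit Arguments. Unset Strict Implicit. Unset Printing Implicit Defensive.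
Import Order.TTheory GRing.Theory Num.Theory.
Local Open Scope ring_scope.

Definition polyset (K : fieldType) (n : nat) := {mpoly K[n]} -> Prop.

Section Ideals.
Variables (K : fieldType) (n : nat).
Implicit Types (I J P : polyset K n) (f g : {mpoly K[n]}).

Definition is_ideal I : Prop :=
  [/\ I 0, (forall f g, I f -> I g -> I (f + g)) & (forall r f, I f -> I (r * f))].

(* graded (homogeneous) ideal: closed under taking homogeneous components
   (pihomog mdeg d f is the degree-d homogeneous component of f) *)
Definition is_graded_ideal I : Prop :=
  is_ideal I /\ forall f (d : nat), I f -> I (pihomog mdeg d f).

Definition is_proper I : Prop := exists f, ~ I f.
Definition is_nonzero I : Prop := exists f, I f /\ f != 0.

Definition is_prime_ideal P : Prop :=
  [/\ is_ideal P, ~ P 1 & forall a b, P (a * b) -> P a \/ P b].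

Definition colon I f : polyset K n := fun g => I (g * f).

Definition ideal_eq I J : Prop := forall f, I f <-> J f.

Definition Ass I : polyset K n -> Prop :=
  fun P => is_prime_ideal P /\ exists g, ideal_eq P (colon I g).

Definition ideal_mul I J : polyset K n :=
  fun f => exists s : seq ({mpoly K[n]} * {mpoly K[n]}),
    (forall x, x \in s -> I x.1 /\ J x.2) /\ f = \sum_(x <- s) x.1 * x.2.

Fixpoint ideal_pow I (k : nat) : polyset K n :=
  match k with
  | 0 => fun _ => True
  | k'.+1 => ideal_mul (ideal_pow I k') I
  end.

(* d = v(I): least d such that some f in S_d has (I : f) in Ass(I).
   (S_d = homogeneous polynomials of degree d, including 0.) *)
Definition is_vnumber I (d : nat) : Prop :=
  (exists f, f \is d.-homog /\ Ass I (colon I f)) /\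
  (forall (e : nat) f, f \is e.-homog -> Ass I (colon I f) -> (d <= e)%N).

Definition is_initdeg I (al : nat) : Prop :=
  (exists f, [/\ f != 0, f \is al.-homog & I f]) /\
  (forall (e : nat) f, f != 0 -> f \is e.-homog -> I f -> (al <= e)%N).

End Ideals.

Definition seq_converges_to (u : nat -> rat) (l : rat) : Prop :=
  forall eps : rat, 0 < eps -> exists N : nat, forall k : nat, (N <= k)%N -> `|u k - l| < eps.

(* Main.v *)
Require Import Defs.
From HB Require Import structures.
From mathcomp Require Import all_boot all_order all_algebra.
From mathcomp Require Import mpoly.
From Stdlib Require Import Classical ClassicalEpsilon.
From mathcomp Require Import ring lra.
Import Order.TTheory GRing.Theory Num.Theory.
Set Implicit Arguments. Unset Strict Implicit. Unset Printing Implicit Defensive.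
Local Open Scope ring_scope.

Section Basics.
Variables (K : fieldType) (n : nat).
Local Notation S := {mpoly K[n]}.
Implicit Types (I J Q : polyset K n) (f g p q x : S).

Lemma idealN I f : is_ideal I -> I f -> I (- f).
Proof. by case=> _ _ hM Hf; rewrite -mulN1r; apply: hM. Qed.

Lemma idealD I f g : is_ideal I -> I f -> I g -> I (f + g).
Proof. by case=> _ hD _; apply: hD. Qed.

Lemma idealB I f g : is_ideal I -> I f -> I g -> I (f - g).
Proof. by move=> hI hf hg; apply: idealD => //; apply: idealN. Qed.

Lemma idealM I r f : is_ideal I -> I f -> I (r * f).
Proof. by case=> _ _ hM; apply: hM. Qed.

Lemma idealMr I r f : is_ideal I -> I f -> I (f * r).
Proof. by move=> hI hf; rewrite mulrC; apply: idealM. Qed.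

Lemma ideal0 I : is_ideal I -> I 0.
Proof. by case. Qed.

Lemma ideal_sum I (T : eqType) (s : seq T) (F : T -> S) :
  is_ideal I -> (forall y, y \in s -> I (F y)) -> I (\sum_(y <- s) F y).
Proof.
move=> hI; elim: s => [|a s IH] H; first by rewrite big_nil; apply: ideal0.
rewrite big_cons; apply: idealD => //; first by apply: H; rewrite mem_head.
by apply: IH => x hx; apply: H; rewrite in_cons hx orbT.
Qed.

Lemma mcoeff_pihomog d p m :
  (pihomog mdeg d p)@_m = if mdeg m == d then p@_m else 0.
Proof.
rewrite pihomogE raddf_sum /= big_mkcond /=.
under eq_bigr do rewrite mcoeffZ mcoeffX.
case: (boolP (m \in msupp p)) => hm.
  rewrite (bigD1_seq m) ?msupp_uniq //= eqxx mulr1 big1 ?addr0 //.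
  by move=> i /negPf ->; case: ifP => _; rewrite ?mulr0.
rewrite big_seq big1 ?(memN_msupp_eq0 hm); first by case: ifP.
move=> i hi; have -> : (i == m) = false.
  by apply/negP => /eqP E; move: hi; rewrite E (negPf hm).
by case: ifP; rewrite ?mulr0.
Qed.

Lemma mcoeff_homog e f m : f \is e.-homog -> f@_m != 0 -> mdeg m = e.
Proof. by move=> /dhomogP hf hm; apply: hf; rewrite mcoeff_msupp. Qed.

Lemma pihomogM_homog d e x f : f \is e.-homog ->
  pihomog mdeg d (x * f) = if (e <= d)%N then pihomog mdeg (d - e) x * f else 0.
Proof.
move=> hf; apply/mpolyP => m; rewrite mcoeff_pihomog.
case: (leqP e d) => hed.
  rewrite mcoeffM; case: eqP => hmd.
    rewrite mcoeffM; apply: eq_bigr => k /eqP hk; rewrite mcoeff_pihomog.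
    have [->|nz] := eqVneq (f@_k.2) 0; first by rewrite !mulr0.
    have := mcoeff_homog hf nz => hk2.
    have Hm := congr1 mdeg hk; rewrite mdegD hk2 in Hm.
    have {hmd}hmd : (mdeg k.1 + e = d)%N by rewrite -Hm.
    by rewrite -hmd addnK eqxx.
  rewrite mcoeffM; apply/esym/big1 => k /eqP hk; rewrite mcoeff_pihomog.
  have [->|nz] := eqVneq (f@_k.2) 0; first by rewrite !mulr0.
  have := mcoeff_homog hf nz => hk2.
  case: eqP => [E|]; last by rewrite mul0r.
  have Hm := congr1 mdeg hk; rewrite mdegD hk2 E subnK // in Hm.
rewrite mcoeff0; case: eqP => // hmd.
rewrite mcoeffM big1 // => k /eqP hk.
have [->|nz] := eqVneq (f@_k.2) 0; first by rewrite !mulr0.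
have := mcoeff_homog hf nz => hk2.
have Hm := congr1 mdeg hk; rewrite mdegD hk2 in Hm.
by move: hed; rewrite ltnNge -hmd; move=> /negP[]; rewrite [X in (_ <= X)%N]Hm leq_addl.
Qed.

Definition degle d p := forall m, p@_m != 0 -> (mdeg m <= d)%N.

Lemma pihomog_top da db a b : degle da a -> degle db b ->
  pihomog mdeg (da + db) (a * b) = pihomog mdeg da a * pihomog mdeg db b.
Proof.
move=> ha hb; apply/mpolyP => m; rewrite mcoeff_pihomog !mcoeffM.
case: ifP => hmd.
  apply: eq_bigr => k /eqP hk; rewrite !mcoeff_pihomog.
  have [->|nza] := eqVneq (a@_k.1) 0; first by rewrite !mul0r; case: ifP; case: ifP; rewrite ?mulr0 ?mul0r.
  have [->|nzb] := eqVneq (b@_k.2) 0; first by rewrite !mulr0; case: ifP; case: ifP; rewrite ?mulr0 ?mul0r.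
  have h1 := ha _ nza; have h2 := hb _ nzb.
  have Hm := congr1 mdeg hk; rewrite mdegD in Hm.
  have E : (mdeg k.1 + mdeg k.2 = da + db)%N by rewrite -Hm; apply/eqP.
  have E1 : mdeg k.1 = da by apply/eqP; rewrite eqn_leq h1 /=; rewrite -(leq_add2r (mdeg k.2)) E leq_add2l.
  have E2 : mdeg k.2 = db by move: E; rewrite E1 => /addnI.
  by rewrite E1 E2 !eqxx.
apply/esym/big1 => k /eqP hk; rewrite !mcoeff_pihomog.
case: eqP => [E1|]; last by rewrite mul0r.
case: eqP => [E2|]; last by rewrite mulr0.
have Hm := congr1 mdeg hk; rewrite mdegD in Hm.
by move: hmd; rewrite [X in X == _]Hm E1 E2 eqxx.
Qed.

Lemma msize_ub k p : (forall m, p@_m != 0 -> (mdeg m < k)%N) -> (msize p <= k)%N.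
Proof.
move=> h; rewrite msizeE; apply/bigmax_leqP_seq => m hm _; apply: h.
by rewrite -mcoeff_msupp.
Qed.

Lemma degle_msize p : degle (msize p).-1 p.
Proof.
move=> m hm; have := msize_mdeg_lt (m := m) (p := p).
rewrite mcoeff_msupp hm => /(_ isT); case: (msize p) => //.
Qed.

End Basics.

Section Ideals2.
Variables (K : fieldType) (n : nat).
Local Notation S := {mpoly K[n]}.
Implicit Types (I J Q : polyset K n) (f g p q x : S).

Lemma ideal_big I (T : Type) (r : seq T) (P : pred T) (F : T -> S) :
  is_ideal I -> (forall i, P i -> I (F i)) -> I (\sum_(i <- r | P i) F i).
Proof.
move=> hI hF; apply: big_ind => //; first exact: ideal0.
by move=> a b; apply: idealD.
Qed.

Lemma ideal_mul_ideal I J : is_ideal I -> is_ideal J -> is_ideal (ideal_mul I J).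
Proof.
move=> hI hJ; split.
- by exists [::]; split => //; rewrite big_nil.
- move=> f g [s1 [h1 ->]] [s2 [h2 ->]]; exists (s1 ++ s2); split; last by rewrite big_cat.
  by move=> y; rewrite mem_cat => /orP[]; [apply: h1|apply: h2].
- move=> r f [s [hs ->]]; exists [seq (r * y.1, y.2) | y <- s]; split.
    move=> y /mapP[z hz ->] /=; have [h1 h2] := hs z hz; split => //.
    exact: idealM.
  by rewrite big_map mulr_sumr; apply: eq_bigr => y _ /=; rewrite mulrA.
Qed.

Lemma ideal_mul_prod I J a b : I a -> J b -> ideal_mul I J (a * b).
Proof. by move=> ha hb; exists [:: (a, b)]; split; [move=> y; rewrite inE => /eqP -> | rewrite big_seq1]. Qed.

Lemma ideal_mul_graded I J : is_graded_ideal I -> is_graded_ideal J ->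
  is_graded_ideal (ideal_mul I J).
Proof.
move=> [hI gI] [hJ gJ]; have hM := ideal_mul_ideal hI hJ; split => // f d [s [hs ->]].
rewrite big_seq raddf_sum /=; apply: ideal_big => // y hy.
have [h1 h2] := hs y hy.
rewrite [in X in pihomog _ _ (_ * X)](@pihomog_partitionE _ _ mdeg (msize y.2) y.2 (leqnn _)).
rewrite mulr_sumr raddf_sum /=; apply: ideal_big => // i _.
rewrite (@pihomogM_homog K n d i) ?pihomogP //; case: ifP => _; last exact: ideal0.
by apply: ideal_mul_prod; [apply: gI | apply: gJ].
Qed.

Lemma colon_ideal I f : is_ideal I -> is_ideal (colon I f).
Proof.
move=> hI; split; rewrite /colon.
- by rewrite mul0r; apply: ideal0.
- by move=> a b ha hb; rewrite mulrDl; apply: idealD.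
- by move=> r a ha; rewrite -mulrA; apply: idealM.
Qed.

Lemma colon_graded I f e : is_graded_ideal I -> f \is e.-homog ->
  is_graded_ideal (colon I f).
Proof.
move=> [hI gI] hf; split; first exact: colon_ideal.
move=> g d; rewrite /colon => hg.
have := gI _ (d + e)%N hg; rewrite (@pihomogM_homog K n (d + e)%N e g f hf) leq_addl addnK //.
Qed.

Lemma ideal_pow_graded I k : is_graded_ideal I -> is_graded_ideal (ideal_pow I k).
Proof.
move=> hI; elim: k => [|k IH] /=; last exact: ideal_mul_graded.
by split => //; split.
Qed.

Lemma ideal_pow_ideal I k : is_graded_ideal I -> is_ideal (ideal_pow I k).
Proof. by move=> hI; case: (ideal_pow_graded k hI). Qed.

Definition low d p := forall m, p@_m != 0 -> (d <= mdeg m)%N.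

Lemma low0 d : low d (0 : S).
Proof. by move=> m; rewrite mcoeff0 eqxx. Qed.

Lemma lowD d p q : low d p -> low d q -> low d (p + q).
Proof.
move=> hp hq m; rewrite mcoeffD.
have [/hp //|/negbNE/eqP Ep] := boolP (p@_m != 0).
by rewrite Ep add0r; apply: hq.
Qed.

Lemma low_big d (T : Type) (r : seq T) (P : pred T) (F : T -> S) :
  (forall i, P i -> low d (F i)) -> low d (\sum_(i <- r | P i) F i).
Proof. by move=> hF; apply: big_ind => //; [apply: low0 | move=> a b; apply: lowD]. Qed.

Lemma lowM d e p q : low d p -> low e q -> low (d + e) (p * q).
Proof.
move=> hp hq m; rewrite mcoeffM => hm.
case: (classic (exists k : 'X_{1..n < (mdeg m).+1, (mdeg m).+1},
   (m == (k.1 + k.2)%MM) && (p@_k.1 * q@_k.2 != 0))).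
  move=> [k /andP[/eqP hk nz]].
  have Hm := congr1 mdeg hk; rewrite mdegD in Hm.
  rewrite [X in (_ <= X)%N]Hm; apply: leq_add.
    by apply: hp; apply: contraNneq nz => ->; rewrite mul0r.
  by apply: hq; apply: contraNneq nz => ->; rewrite mulr0.
move=> hne; case/negP: hm; rewrite big1 //= => k hk.
apply/eqP; apply/negPn/negP => nz; apply: hne; exists k; by rewrite hk nz.
Qed.

Lemma low_le d d' p : (d' <= d)%N -> low d p -> low d' p.
Proof. by move=> hd hp m /hp; apply: leq_trans. Qed.

Lemma graded_low I a f : is_graded_ideal I -> is_initdeg I a -> I f -> low a f.
Proof.
move=> [hI gI] [_ ha] hf m hm; rewrite leqNgt; apply/negP => lt.
have h0 : pihomog mdeg (mdeg m) f != 0.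
  apply: contraNneq hm => E; have := mcoeff_pihomog (mdeg m) f m.
  by rewrite E mcoeff0 eqxx => <-.
by have := ha _ _ h0 (pihomogP _ _ _) (gI _ _ hf); rewrite leqNgt lt.
Qed.

Lemma ideal_pow_low I a k f : is_graded_ideal I -> is_initdeg I a ->
  ideal_pow I k f -> low (k * a) f.
Proof.
move=> hI ha; elim: k f => [|k IH] f /=; first by move=> _ m _; rewrite mul0n.
move=> [s [hs ->]]; rewrite big_seq; apply: low_big => y hy.
have [h1 h2] := hs y hy; rewrite mulSnr; apply: lowM; first exact: IH.
exact: graded_low h2.
Qed.

End Ideals2.

Section Dickson.

Lemma min_after (g : nat -> nat) p :
  exists q, (p < q)%N /\ forall i, (p < i)%N -> (g q <= g i)%N.
Proof.
suff H : forall v i, (p < i)%N -> (g i <= v)%N ->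
    exists q, (p < q)%N /\ forall i, (p < i)%N -> (g q <= g i)%N.
  exact: (H (g p.+1) p.+1).
elim=> [|v IH] i hi hv.
  by exists i; split => // j _; move: hv; rewrite leqn0 => /eqP ->.
case: (classic (exists i', (p < i')%N /\ (g i' <= v)%N)) => [[i' [h1 h2]]|hn].
  exact: IH h1 h2.
exists i; split => // j hj; apply: (leq_trans hv); rewrite ltnNge; apply/negP => hjv.
by apply: hn; exists j.
Qed.

Lemma sincr_lt (phi : nat -> nat) : (forall s, phi s < phi s.+1)%N ->
  forall s t, (s < t)%N -> (phi s < phi t)%N.
Proof.
move=> h s; elim=> // t IH; rewrite ltnS leq_eqVlt => /orP[/eqP->|/IH hst] //.
exact: ltn_trans hst (h t).
Qed.

Lemma nondecr_le (h : nat -> nat) : (forall s, h s <= h s.+1)%N ->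
  forall s t, (s <= t)%N -> (h s <= h t)%N.
Proof.
move=> H s; elim=> [|t IH]; first by rewrite leqn0 => /eqP ->.
rewrite leq_eqVlt => /orP[/eqP->|] //; rewrite ltnS => /IH hst.
exact: leq_trans hst (H t).
Qed.

Lemma subseq_mono (g : nat -> nat) : exists psi : nat -> nat,
  (forall s, psi s < psi s.+1)%N /\ (forall s, g (psi s) <= g (psi s.+1))%N.
Proof.
have H := min_after g.
pose idx p := proj1_sig (constructive_indefinite_description _ (H p)).
have idxP p : (p < idx p)%N /\ forall i, (p < i)%N -> (g (idx p) <= g i)%N.
  exact: proj2_sig (constructive_indefinite_description _ (H p)).
exists (fun s => iter s.+1 idx 0%N); split => s.
  by rewrite [iter s.+2 _ _]iterS; case: (idxP (iter s.+1 idx 0%N)).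
rewrite [iter s.+2 _ _]iterS [iter s.+1 _ _]iterS.
set a := iter s idx 0%N.
have [h1 h2] := idxP a; have [h3 _] := idxP (idx a).
by apply: h2; apply: ltn_trans h3.
Qed.

Lemma dickson_gen n (f : nat -> 'X_{1..n}) j : (j <= n)%N ->
  exists phi : nat -> nat, (forall s, phi s < phi s.+1)%N /\
    forall s (i : 'I_n), (i < j)%N -> (f (phi s) i <= f (phi s.+1) i)%N.
Proof.
elim: j => [|j IH] hj; first by exists id; split.
have [phi [hphi hmon]] := IH (ltnW hj).
pose jj : 'I_n := Ordinal hj.
have [psi [hpsi hmpsi]] := subseq_mono (fun s => f (phi s) jj).
exists (fun s => phi (psi s)); split => [s|s i hi].
  by apply: sincr_lt.
rewrite ltnS leq_eqVlt in hi; case/orP: hi => [/eqP hij|hi].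
  have -> : i = jj by apply: val_inj.
  exact: hmpsi.
apply: (nondecr_le (h := fun s => f (phi s) i)) => [t|]; first exact: hmon.
exact: ltnW.
Qed.

Lemma dickson n (f : nat -> 'X_{1..n}) : exists i j, (i < j)%N /\ (f i <= f j)%MM.
Proof.
have [phi [hphi hmon]] := dickson_gen f (leqnn n).
exists (phi 0%N), (phi 1%N); split; first exact: hphi.
by apply/mnm_lepP => i; apply: hmon.
Qed.

End Dickson.

Section Noether.
Variables (K : fieldType) (n : nat).
Local Notation S := {mpoly K[n]}.
Implicit Types (I J Q : polyset K n) (f g p q x : S).

Definition LT J (m : 'X_{1..n}) := exists p, [/\ J p, p != 0 & mlead p = m].

Lemma mpolyX_neq0 (e : 'X_{1..n}) : 'X_[e] != 0 :> S.
Proof.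
apply/eqP => E; have := @mcoeffX n K e e; rewrite E mcoeff0 eqxx => /eqP.
by rewrite eq_sym oner_eq0.
Qed.

Lemma LT_up J m e : is_ideal J -> LT J m -> LT J (m + e)%MM.
Proof.
move=> hJ [p [hp nz <-]]; exists (p * 'X_[e]); split.
- exact: idealMr.
- by rewrite mulf_neq0 // mpolyX_neq0.
- by rewrite mleadM // ?mpolyX_neq0 // mleadXm.
Qed.

Lemma LT_sub J J' m : (forall x, J x -> J' x) -> LT J m -> LT J' m.
Proof. by move=> h [p [hp nz E]]; exists p; split => //; apply: h. Qed.

Lemma LT_eq J J' : is_ideal J -> is_ideal J' -> (forall x, J x -> J' x) ->
  (forall m, LT J' m -> LT J m) -> forall x, J' x -> J x.
Proof.
move=> hJ hJ' sub hLT p; elim/mleadrect: p => p IH hp.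
have [->|nzp] := eqVneq p 0; first exact: ideal0.
have [q [hq nzq Eq]] := hLT (mlead p) (ex_intro _ p (And3 hp nzp erefl)).
pose c := p@_(mlead p) / q@_(mlead q).
have hcq : J (c *: q) by rewrite -mul_mpolyC; apply: idealM.
have Ep : p = (p - c *: q) + c *: q by rewrite subrK.
have hr' : J' (p - c *: q) by apply: idealB => //; apply: sub.
have [Er|nzr] := eqVneq (p - c *: q) 0.
  by rewrite Ep Er add0r.
rewrite Ep; apply: idealD => //; apply: IH => //.
have le1 : (mlead (p - c *: q) <= mlead p)%O.
  apply: le_trans (mleadB_le _ _) _; rewrite leUx lexx /=.
  by rewrite -Eq mleadZ_le.
rewrite lt_neqAle le1 andbT; apply/negP => /eqP E.
move/negP: nzr; apply; rewrite -mleadc_eq0 E mcoeffB mcoeffZ /c Eq divfK ?subrr //.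
by rewrite -Eq mleadc_eq0.
Qed.

Lemma noeth_max (F : polyset K n -> Prop) :
  (forall Q, F Q -> is_ideal Q) -> (exists Q, F Q) ->
  exists Q, F Q /\ forall Q', F Q' -> (forall x, Q x -> Q' x) -> forall x, Q' x -> Q x.
Proof.
move=> hF [Q0 hQ0].
case: (classic (exists Q, F Q /\ forall Q', F Q' -> (forall x, Q x -> Q' x) ->
   forall x, Q' x -> Q x)) => // Hn.
have step : forall Q, F Q -> exists Q', F Q' /\ (forall x, Q x -> Q' x) /\
    exists x, Q' x /\ ~ Q x.
  move=> Q hQ; apply: NNPP => H1; apply: Hn; exists Q; split => // Q' hQ' sub x hx.
  apply: NNPP => nx; apply: H1; exists Q'; split => //; split => //.
  by exists x.
have step' : forall q : {Q | F Q}, {q' : {Q | F Q} | (forall x, sval q x -> sval q' x) /\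
    exists x, sval q' x /\ ~ sval q x}.
  move=> q; apply: constructive_indefinite_description.
  have [Q' [hQ' [h1 h2]]] := step _ (svalP q).
  by exists (exist _ Q' hQ').
pose nxt (w : {Q | F Q}) := sval (step' w).
pose C t := sval (iter t nxt (exist _ Q0 hQ0)).
have hC t : F (C t) by exact: svalP.
have Cinc t : forall x, C t x -> C t.+1 x.
  rewrite /C iterS; exact: (proj1 (svalP (step' _))).
have Cnew t : exists x, C t.+1 x /\ ~ C t x.
  rewrite /C iterS; exact: (proj2 (svalP (step' _))).
have Cmon s t : (s <= t)%N -> forall x, C s x -> C t x.
  elim: t => [|t IH]; first by rewrite leqn0 => /eqP ->.
  rewrite leq_eqVlt => /orP[/eqP ->|] //; rewrite ltnS => /IH h x hx.
  by apply: Cinc; apply: h.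
have newLT t : exists m, LT (C t.+1) m /\ ~ LT (C t) m.
  apply: NNPP => H1; have [x [hx nx]] := Cnew t; apply: nx.
  apply: (LT_eq (hF _ (hC t)) (hF _ (hC t.+1)) (Cinc t)) => // m hm.
  by apply: NNPP => nm; apply: H1; exists m.
pose mm t := proj1_sig (constructive_indefinite_description _ (newLT t)).
have mmP t : LT (C t.+1) (mm t) /\ ~ LT (C t) (mm t).
  exact: proj2_sig (constructive_indefinite_description _ (newLT t)).
have [i [j [hij hle]]] := dickson mm.
have [_ nj] := mmP j; exfalso; apply: nj.
have h1 : LT (C j) (mm i) by apply: LT_sub (Cmon _ _ hij) (proj1 (mmP i)).
by rewrite -(submK hle) addmC; apply: LT_up => //; apply: hF.
Qed.

End Noether.

Section GradedPrime.
Variables (K : fieldType) (n : nat).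
Local Notation S := {mpoly K[n]}.
Implicit Types (I J Q : polyset K n) (f g p q x : S).

Lemma msize_eq0 p : (msize p == 0%N) = (p == 0).
Proof. exact: mmeasure_poly_eq0. Qed.

Lemma drop_top (a : S) : a != 0 ->
  (msize (a - pihomog mdeg (msize a).-1 a) < msize a)%N.
Proof.
move=> nz; have hpos : (0 < msize a)%N by rewrite lt0n msize_eq0.
rewrite -(prednK hpos) ltnS; apply: msize_ub => m.
rewrite mcoeffB mcoeff_pihomog; case: (mdeg m =P (msize a).-1) => [_|ne]; first by rewrite subrr eqxx.
rewrite subr0 => hm; have := degle_msize hm; rewrite leq_eqVlt => /orP[/eqP E|//].
by case: ne.
Qed.

Lemma graded_prime Q : is_ideal Q -> (forall p (d : nat), Q p -> Q (pihomog mdeg d p)) ->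
  ~ Q 1 ->
  (forall (a b : S) (da db : nat), a \is da.-homog -> b \is db.-homog -> Q (a * b) -> Q a \/ Q b) ->
  is_prime_ideal Q.
Proof.
move=> hQ gQ nQ1 hh; split => // a b.
suff H : forall N (a b : S), (msize a + msize b <= N)%N -> Q (a * b) -> Q a \/ Q b.
  exact: (H _ a b (leqnn _)).
elim=> [|N IH] {}a {}b hN hab.
  left; move: hN; rewrite leqn0 addn_eq0 => /andP[ha _].
  by rewrite msize_eq0 in ha; rewrite (eqP ha); apply: ideal0.
have [->|nza] := eqVneq a 0; first by left; apply: ideal0.
have [->|nzb] := eqVneq b 0; first by right; apply: ideal0.
set atp := pihomog mdeg (msize a).-1 a.
set btp := pihomog mdeg (msize b).-1 b.
case: (classic (Q atp)) => hat.
  have Ea : a = (a - atp) + atp by rewrite subrK.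
  have h1 : Q ((a - atp) * b) by rewrite mulrBl; apply: idealB => //; apply: idealMr.
  have h2 := drop_top nza.
  have hlt : (msize (a - atp) + msize b <= N)%N.
    by rewrite -ltnS; apply: leq_trans hN; rewrite ltn_add2r.
  case: (IH _ _ hlt h1) => [ha'|]; last by right.
  by left; rewrite Ea; apply: idealD.
case: (classic (Q btp)) => hbt.
  have Eb : b = (b - btp) + btp by rewrite subrK.
  have h1 : Q (a * (b - btp)) by rewrite mulrBr; apply: idealB => //; apply: idealM.
  have h2 := drop_top nzb.
  have hlt : (msize a + msize (b - btp) <= N)%N.
    by rewrite -ltnS; apply: leq_trans hN; rewrite ltn_add2l.
  case: (IH _ _ hlt h1) => [|hb']; first by left.
  by right; rewrite Eb; apply: idealD.
have := gQ _ ((msize a).-1 + (msize b).-1)%N hab.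
rewrite (pihomog_top (@degle_msize K n a) (@degle_msize K n b)) => H.
by case: (hh _ _ _ _ (pihomogP mdeg _ a) (pihomogP mdeg _ b) H).
Qed.

Lemma exists_hom_prime J : is_graded_ideal J -> ~ J 1 ->
  exists f (d : nat), f \is d.-homog /\ is_prime_ideal (colon J f).
Proof.
move=> [hJ gJ] nJ1.
pose F (Q : polyset K n) := exists f (d : nat), [/\ f \is d.-homog, ~ J f & Q = colon J f].
have hF : forall Q, F Q -> is_ideal Q by move=> Q [f [d [_ _ ->]]]; apply: colon_ideal.
have [Q [[f0 [d0 [hf0 nJf0 EQ]]] hmax]] : exists Q, F Q /\ forall Q', F Q' ->
    (forall x, Q x -> Q' x) -> forall x, Q' x -> Q x.
  apply: noeth_max => //; exists (colon J 1), 1, 0%N; split => //; exact: dhomog1.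
subst Q; exists f0, d0; split => //.
apply: graded_prime.
- exact: colon_ideal.
- by move=> p d; case: (colon_graded (conj hJ gJ) hf0) => _; apply.
- by rewrite /colon mul1r.
move=> a b da db ha hb hab; case: (classic (colon J f0 a)) => [|nQa]; first by left.
right; have hF' : F (colon J (a * f0)).
  exists (a * f0), (da + d0)%N; split => //; exact: dhomogM.
apply: (hmax _ hF').
  by move=> x hx; rewrite /colon mulrCA; apply: idealM.
by rewrite /colon mulrA [b * a]mulrC.
Qed.

End GradedPrime.

Section Main.
Variables (K : fieldType) (n : nat).
Local Notation S := {mpoly K[n]}.
Implicit Types (I J Q P : polyset K n) (f g p q x : S).

Lemma ex_min (P : nat -> Prop) : (exists k, P k) -> exists m, P m /\ forall k, P k -> (m <= k)%N.
Proof.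
move=> [k hk]; elim/ltn_ind: k hk => k IH hk.
case: (classic (exists j, (j < k)%N /\ P j)) => [[j [hj pj]]|hn]; first exact: IH hj pj.
exists k; split => // j pj; rewrite leqNgt; apply/negP => hj; apply: hn; by exists j.
Qed.

Lemma prime_ext P P' : ideal_eq P P' -> is_prime_ideal P -> is_prime_ideal P'.
Proof.
move=> E [[h0 hD hM] n1 hp]; split.
- split; first by apply/E.
  + by move=> f g /E hf /E hg; apply/E; apply: hD.
  + by move=> r f /E hf; apply/E; apply: hM.
- by move/E.
- by move=> al b /E /hp [] ?; [left|right]; apply/E.
Qed.

Lemma prime_pow P x k : is_prime_ideal P -> P (x ^+ k.+1) -> P x.
Proof.
move=> [hP n1 hp]; elim: k => [|k IH]; first by rewrite expr1.
by rewrite exprSr => /hp [].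
Qed.

Lemma pow_in I g k : is_graded_ideal I -> I g -> ideal_pow I k (g ^+ k).
Proof.
move=> hI hg; elim: k => [|k IH] //=.
by rewrite exprSr; apply: ideal_mul_prod.
Qed.

Lemma initdeg_exists I : is_graded_ideal I -> is_nonzero I -> exists al, is_initdeg I al.
Proof.
move=> [hI gI] [f [hf nzf]].
have [al [[g [nzg hg Ig]] hmin]] : exists al, (exists g, [/\ g != 0, g \is al.-homog & I g]) /\
    forall k, (exists g, [/\ g != 0, g \is k.-homog & I g]) -> (al <= k)%N.
  apply: ex_min; exists (mdeg (mlead f)), (pihomog mdeg (mdeg (mlead f)) f); split.
  - apply/eqP => E; have := mcoeff_pihomog (mdeg (mlead f)) f (mlead f).
    by rewrite E mcoeff0 eqxx => /esym/eqP; rewrite mleadc_eq0 (negPf nzf).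
  - exact: pihomogP.
  - exact: gI.
exists al; split; first by exists g.
by move=> e h nzh hh Ih; apply: hmin; exists h.
Qed.

Lemma homog0_const f : f \is 0.-homog -> f = (f@_0)%:MP.
Proof.
move=> hf; apply: msize1_polyC; apply: msize_ub => m nz.
by rewrite (mcoeff_homog hf nz).
Qed.

Lemma initdeg_pos I al : is_graded_ideal I -> is_proper I -> is_initdeg I al -> (0 < al)%N.
Proof.
move=> [hI gI] [h nh] [[f [nzf hf If]] _]; rewrite lt0n; apply/negP => /eqP a0.
subst al; apply: nh; have Ef := homog0_const hf.
have nzc : f@_0 != 0 by apply: contraNneq nzf => E; rewrite Ef E mpolyC0.
have I1 : I 1.
  have := idealM ((f@_0)^-1)%:MP hI If; rewrite {2}Ef -mpolyCM mulVf //.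
by rewrite -[h]mulr1; apply: idealM.
Qed.

Lemma pow_not1 I al k : is_graded_ideal I -> is_initdeg I al -> (0 < al)%N -> (0 < k)%N ->
  ~ ideal_pow I k 1.
Proof.
move=> hI ha apos kpos h1; have := ideal_pow_low hI ha h1 (m := 0%MM).
rewrite mcoeff1 eqxx oner_eq0 mdeg0 leqn0 muln_eq0 => /(_ isT).
by move: apos kpos; rewrite !lt0n => /negPf -> /negPf ->.
Qed.

Lemma lower_bound I al k e f : is_graded_ideal I -> is_initdeg I al -> (0 < k)%N ->
  f \is e.-homog -> Ass (ideal_pow I k) (colon (ideal_pow I k) f) -> (k * al <= al + e)%N.
Proof.
move=> hI ha kpos hf [hP _].
have [[g [nzg hg Ig]] _] := ha.
have hk := ideal_pow_ideal k hI.
have Pg : colon (ideal_pow I k) f g.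
  apply: (prime_pow (k := k.-1) hP); rewrite prednK //.
  by rewrite /colon; apply: idealMr => //; apply: pow_in.
have nf : f != 0.
  apply/eqP => E; case: hP => _ n1 _; apply: n1; rewrite /colon E mulr0.
  exact: ideal0.
have nzgf : g * f != 0 by rewrite mulf_neq0.
have hgf : g * f \is (al + e).-homog by apply: dhomogM.
have nzc : (g * f)@_(mlead (g * f)) != 0 by rewrite mleadc_eq0.
have := ideal_pow_low hI ha Pg nzc.
by rewrite (mcoeff_homog hgf nzc).
Qed.

End Main.

Section Upper.
Variables (K : fieldType) (n : nat).
Local Notation S := {mpoly K[n]}.
Implicit Types (I J Q P : polyset K n) (f g p q x : S).

Lemma upper_bound I al : is_graded_ideal I -> is_initdeg I al -> (0 < al)%N ->
  exists t0 (delta : nat), forall k, (t0 < k)%N -> exists f,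
    f \is (k.-1 * al + delta)%N.-homog /\ Ass (ideal_pow I k) (colon (ideal_pow I k) f).
Proof.
move=> hI ha apos; have [[g [nzg hg Ig]] _] := ha.
pose J t := colon (ideal_pow I t.+1) (g ^+ t).
have hJg t : is_graded_ideal (J t).
  exact: colon_graded (ideal_pow_graded t.+1 hI) (dhomogMn t hg).
have Jinc t : forall x, J t x -> J t.+1 x.
  move=> x hx; rewrite /J /colon exprSr mulrA /=; exact: ideal_mul_prod.
have Jmon s t : (s <= t)%N -> forall x, J s x -> J t x.
  elim: t => [|t IH]; first by rewrite leqn0 => /eqP ->.
  rewrite leq_eqVlt => /orP[/eqP ->|] //; rewrite ltnS => /IH h x hx.
  by apply: Jinc; apply: h.
have [Q [[t0 EQ] hmax]] : exists Q, (exists t, Q = J t) /\ forall Q', (exists t, Q' = J t) ->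
    (forall x, Q x -> Q' x) -> forall x, Q' x -> Q x.
  apply: noeth_max; last by exists (J 0%N), 0%N.
  by move=> Q [t ->]; case: (hJg t).
subst Q.
have Jstab t : (t0 <= t)%N -> forall x, J t x -> J t0 x.
  by move=> ht; apply: hmax; [exists t | apply: Jmon].
have nJ1 : ~ J t0 1.
  rewrite /J /colon mul1r => H.
  have nz : g ^+ t0 != 0 by rewrite expf_neq0.
  have nzc : (g ^+ t0)@_(mlead (g ^+ t0)) != 0 by rewrite mleadc_eq0.
  have := ideal_pow_low hI ha H nzc.
  rewrite (mcoeff_homog (dhomogMn t0 hg) nzc) => H2.
  rewrite mulSn [(al * t0)%N]mulnC in H2.
  rewrite -{2}[(t0 * al)%N]add0n leq_add2r in H2.
  by rewrite lt0n -leqn0 H2 in apos.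
have [h [delta [hh hprime]]] := exists_hom_prime (hJg t0) nJ1.
exists t0, delta => k; case: k => // t hk.
exists (g ^+ t * h); split.
  by rewrite /= mulnC; apply: dhomogM => //; apply: dhomogMn.
split; last by exists (g ^+ t * h).
apply: prime_ext hprime => x; split; rewrite /colon.
  move=> /(Jmon _ t hk); rewrite /J /colon.
  by rewrite [g ^+ t * h]mulrC mulrA.
move=> H; apply: (Jstab t hk); rewrite /J /colon.
by move: H; rewrite [g ^+ t * h]mulrC mulrA.
Qed.

End Upper.

Theorem theorem4p1 (K : fieldType) (n : nat) (I : polyset K n) :
  is_graded_ideal I -> is_nonzero I -> is_proper I ->
  exists (v : nat -> nat) (a : nat),
    [/\ forall k : nat, (0 < k)%N -> is_vnumber (ideal_pow I k) (v k),
        is_initdeg I a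
      & seq_converges_to (fun k : nat => (v k)%:R / k%:R) a%:R].
Proof.
move=> hI hnz hpr.
have [al ha] := initdeg_exists hI hnz.
have apos := initdeg_pos hI hpr ha.
pose v k := epsilon (inhabits 0%N) (fun d => is_vnumber (ideal_pow I k) d).
have hv : forall k, (0 < k)%N -> is_vnumber (ideal_pow I k) (v k).
  move=> k kpos; apply: epsilon_spec.
  have [f [d [hf hp]]] := exists_hom_prime (ideal_pow_graded k hI) (pow_not1 hI ha apos kpos).
  have [m [[f' [hf' hA]] hmin]] := @ex_min (fun d => exists f, f \is d.-homog /\
      Ass (ideal_pow I k) (colon (ideal_pow I k) f))
    (ex_intro _ d (ex_intro _ f (conj hf (conj hp (ex_intro _ f (fun x => iff_refl _)))))).
  exists m; split; first by exists f'.
  by move=> e g hg hA'; apply: hmin; exists g.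
exists v, al; split => //.
have [t0 [delta hub]] := upper_bound hI ha apos.
move=> eps heps.
pose C := (al + delta)%N.
have [N0 hN0] : exists N0 : nat, C%:R / eps < N0%:R.
  exists (Num.Def.archi_bound (C%:R / eps)); apply: archi_boundP.
  by rewrite divr_ge0 // ltW.
exists (maxn t0.+1 N0) => k hk.
have k1 : (t0 < k)%N by apply: leq_trans hk; apply: leq_maxl.
have kpos : (0 < k)%N by apply: leq_trans k1.
have [[f [hf hA]] _] := hv k kpos.
have lb := lower_bound hI ha kpos hf hA.
have [f2 [hf2 hA2]] := hub k k1.
have [_ hmin] := hv k kpos.
have ub := hmin _ _ hf2 hA2.
have ub2 : (v k <= k * al + delta)%N.
  by apply: leq_trans ub _; rewrite leq_add2r leq_mul2r leq_pred orbT.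
have L1 : (k%:R * al%:R <= al%:R + (v k)%:R :> rat) by rewrite -natrM -natrD ler_nat.
have L2 : ((v k)%:R <= k%:R * al%:R + delta%:R :> rat) by rewrite -natrM -natrD ler_nat.
have kp : (0 < k%:R :> rat) by rewrite ltr0n.
have L3 : (al%:R + delta%:R < k%:R * eps :> rat).
  rewrite -natrD -/C -ltr_pdivrMr //; apply: lt_le_trans hN0 _.
  by rewrite ler_nat; apply: leq_trans hk; apply: leq_maxr.
rewrite (_ : (v k)%:R / k%:R - al%:R = ((v k)%:R - k%:R * al%:R) / k%:R); last first.
  by field; rewrite pnatr_eq0 -lt0n.
rewrite normrM normfV (gtr0_norm kp) ltr_pdivrMr // ltr_norml.
have a0 : (0 <= al%:R :> rat) by rewrite ler0n.
have d0 : (0 <= delta%:R :> rat) by rewrite ler0n.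
apply/andP; split; lra.
Qed.
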